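(* Let a product two-action game with $m$ players, with data $\underline v$ and $a^i_j$ as in the context, be given. For $\pi\in S_m$ put $$EC(\pi):=\{\underline\gamma\in[0,1]^m \mid L(\underline\gamma)=F(\pi),\ \gamma^j=a^{\pi(j)}_j \text{ for all } j\in\mathcal A\setminus F(\pi)\}.$$ Then the set of equilibrium candidates of the game equals $\bigcup_{\pi\in S_m}EC(\pi)$, and this union is disjoint. Moreover $|EC(\pi)|=2^{|F(\pi)|}$ for every $\pi\in S_m$, and the total number of equilibrium candidates is $$\sum_{l=0}^m\binom{m}{l}2^l\cdot !(m-l)=V(m).$$
   Context: Fix an integer $m\ge 1$ and $\mathcal A=\{1,\dots,m\}$. A two-action game is a finite game in normal form with player set $\mathcal A$ in which each player $i$ has exactly two pure strategies $s^i_0,s^i_1$, together with utility functions $U^i:S\to\mathbb R$, where $S=\prod_{i\in\mathcal A}\{s^i_0,s^i_1\}$. A mixed strategy combination is identified with $\underline\gamma=(\gamma^1,\dots,\gamma^m)\in[0,1]^m$, where $\gamma^i$ is the probability with which player $i$ plays $s^i_1$. The expected utility $V^i$ is the multilinear extension $V^i(\underline\gamma)=\sum_{(j_1,\dots,j_m)\in\{0,1\}^m}\prod_{k=1}^m p_k(j_k)\,U^i(s^1_{j_1},\dots,s^m_{j_m})$ with $p_k(1)=\gamma^k$, $p_k(0)=1-\gamma^k$. Write $\underline\gamma^{-i}=(\gamma^j)_{j\ne i}$ and $\lambda^i(\underline\gamma^{-i}):=V^i(\underline\gamma)|_{\gamma^i=1}-V^i(\underline\gamma)|_{\gamma^i=0}$,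 a polynomial in $\underline\gamma^{-i}$. A Nash equilibrium is a point $\underline\gamma\in[0,1]^m$ such that for every $i$: $\lambda^i(\underline\gamma^{-i})=0$ if $0<\gamma^i<1$; $\lambda^i(\underline\gamma^{-i})\le 0$ if $\gamma^i=0$; $\lambda^i(\underline\gamma^{-i})\ge 0$ if $\gamma^i=1$. An equilibrium candidate is a point $\underline\gamma\in[0,1]^m$ with $\lambda^i(\underline\gamma^{-i})=0$ for every $i$ with $0<\gamma^i<1$. For $\underline\gamma$ put $L_0(\underline\gamma)=\{i:\gamma^i=0\}$, $L_1(\underline\gamma)=\{i:\gamma^i=1\}$, $L(\underline\gamma)=L_0(\underline\gamma)\cup L_1(\underline\gamma)$. A two-action game is a product two-action game if there exist $\underline v=(v_1,\dots,v_m)\in\{0,1\}^m$ and numbers $a^i_j\in(0,1)$ for $i,j\in\mathcal A$, $i\ne j$, with $a^{i_1}_j\neq a^{i_2}_j$ whenever $i_1\neq i_2$ and both differ from $j$, such that $\lambda^i(\underline\gamma^{-i})=(-1)^{v_i}\prod_{j\in\mathcal A\setminus\{i\}}(\gamma^j-a^i_j)$ for every $i\in\mathcal A$. For $\pi\in S_m$, $F(\pi)=\{i\in\mathcal A:\pi(i)=i\}$ is its set of fixed points. $\mathrm{Der}_m$ denotes the set of derangements (permutations without fixed points) in $S_m$, and the subfactorial $!n$ is the number of derangements of an $n$-element set ($!0=1$, $!1=0$). $V(m):=\sum_{l=0}^m\binom{m}{l}2^l\cdot!(m-l)$. *)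

(* Defs.v *)
From HB Require Import structures.
From mathcomp Require Import all_boot all_order all_algebra all_fingroup.
Set Implicit Arguments. Unset Strict Implicit. Unset Printing Implicit Defensive.
Import Order.TTheory GRing.Theory Num.Theory.
Local Open Scope ring_scope.

(* Players are 'I_m; a pure profile is s : {ffun 'I_m -> bool}
   (s k = true means player k plays s^k_1).  A mixed profile is
   gamma : 'I_m -> R, gamma k = probability of s^k_1. *)

Section Game.
Variables (R : realFieldType) (m : nat).

Definition exp_util (U : 'I_m -> {ffun 'I_m -> bool} -> R) (i : 'I_m)
  (g : 'I_m -> R) : R :=
  \sum_(s : {ffun 'I_m -> bool})
     (\prod_(k < m) (if s k then g k else 1 - g k)) * U i s.

Definition set_coord (g : 'I_m -> R) (i : 'I_m) (x : R) : 'I_m -> R :=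
  fun k => if k == i then x else g k.

(* lambda^i : V^i|_{gamma^i=1} - V^i|_{gamma^i=0}; it does not depend on gamma^i *)
Definition lam U (i : 'I_m) (g : 'I_m -> R) : R :=
  exp_util U i (set_coord g i 1) - exp_util U i (set_coord g i 0).

Definition in_cube (g : 'I_m -> R) : Prop := forall k, 0 <= g k <= 1.

Definition equilibrium_candidate U (g : 'I_m -> R) : Prop :=
  in_cube g /\ forall i, 0 < g i < 1 -> lam U i g = 0.

Definition Lset (g : 'I_m -> R) : {set 'I_m} :=
  [set i | (g i == 0) || (g i == 1)].

Definition fixpts (p : {perm 'I_m}) : {set 'I_m} := [set i | p i == i].

Definition product_game U (v : 'I_m -> bool) (a : 'I_m -> 'I_m -> R) : Prop :=
  [/\ (forall i j, i != j -> 0 < a i j < 1),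
      (forall i1 i2 j, i1 != i2 -> i1 != j -> i2 != j -> a i1 j != a i2 j) &
      (forall i (g : 'I_m -> R),
          lam U i g = (-1) ^+ v i * \prod_(j < m | j != i) (g j - a i j))].

Definition EC (a : 'I_m -> 'I_m -> R) (p : {perm 'I_m}) (g : 'I_m -> R) : Prop :=
  [/\ in_cube g, Lset g = fixpts p &
      forall j, j \notin fixpts p -> g j = a (p j) j].

End Game.

Definition has_card (T : eqType) (P : T -> Prop) (n : nat) : Prop :=
  exists s : seq T, [/\ uniq s, size s = n & forall x, P x <-> x \in s].

Definition subfact (n : nat) : nat :=
  #|[set p : {perm 'I_n} | [forall i, p i != i]]|.

Definition Vnum (m : nat) : nat :=
  (\sum_(l < m.+1) 'C(m, l) * 2 ^ l * subfact (m - l))%N.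

(* Main.v *)
Require Import Defs.
From HB Require Import structures.
From mathcomp Require Import all_boot all_order all_algebra all_fingroup.
Import Order.TTheory GRing.Theory Num.Theory.
Definition der (T : finType) : nat := #|[set p : {perm T} | [forall i, p i != i]]|.

Lemma der_card (T : finType) : der T = subfact #|T|.
Proof.
rewrite /der /subfact.
have cj : forall q : {perm T}, injective (fun i : 'I_#|T| => enum_rank (q (enum_val i))).
  by move=> q i j /enum_rank_inj/perm_inj/enum_val_inj.
pose c q := perm (cj q).
have cinj : injective c.
  move=> q1 q2 /permP E; apply/permP => x.
  have := E (enum_rank x); rewrite !permE /= enum_rankK.
  by move/enum_rank_inj.
rewrite -(card_imset _ cinj); apply: eq_card => r.
rewrite inE; apply/imsetP/idP.
  case=> q; rewrite inE => /forallP Hq ->; apply/forallP => i.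
  by rewrite permE; apply: contra (Hq (enum_val i)) => /eqP/(congr1 enum_val); rewrite enum_rankK => ->.
move=> /forallP Hr.
have dj : injective (fun x : T => enum_val (r (enum_rank x))).
  by move=> x y /enum_val_inj/perm_inj/enum_rank_inj.
exists (perm dj).
  rewrite inE; apply/forallP => x; rewrite permE.
  by apply: contra (Hr (enum_rank x)) => /eqP/(congr1 enum_rank); rewrite enum_valK => ->.
by apply/permP => i; rewrite !permE /= !enum_valK.
Qed.

Lemma fix_count (m : nat) (F : {set 'I_m}) :
  #|[set p : {perm 'I_m} | fixpts p == F]| = subfact (m - #|F|).
Proof.
have -> : (m - #|F| = #|{: {x : 'I_m | x \in ~: F}}|)%N.
  have H : (#|F| + #|~:F| = m)%N by rewrite cardsC card_ord.
  by rewrite card_sig -[X in (X - _)%N]H addKn; apply: eq_card => x; rewrite !inE.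
rewrite -der_card /der.
pose T' := ({x : 'I_m | x \in ~: F}).
have ej : forall q : {perm T'}, injective (fun x : 'I_m => if insub x is Some y then val (q y) else x).
  move=> q x1 x2.
  case: insubP => [y1 Hy1 <-|Hn1]; case: insubP => [y2 Hy2 <-|Hn2] //.
  - by move/val_inj/perm_inj => ->.
  - move=> E; move: Hn2; rewrite -E.
    by case: (q y1) => z Hz /=; rewrite Hz.
  - move=> E; move: Hn1; rewrite E.
    by case: (q y2) => z Hz /=; rewrite Hz.
pose e q := perm (ej q).
have einj : injective e.
  move=> q1 q2 /permP E; apply/permP => y.
  have := E (val y); rewrite !permE /= valK.
  by move/val_inj.
rewrite -(card_imset _ einj); apply: eq_card => p.
symmetry; apply/imsetP/idP.
  case=> q Hq ->; move: Hq; rewrite !inE => /forallP Hq; apply/eqP/setP => x.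
  rewrite /fixpts inE permE.
  case: insubP => [y Hy Ex|Hn].
    subst x.
    move: Hy; rewrite inE => /negbTE ->.
    by apply/negbTE; apply: contra (Hq y) => /eqP/val_inj ->.
  by move: Hn; rewrite inE negbK => ->; rewrite eqxx.
rewrite inE => /eqP Hp.
have Hfix : forall x, (p x == x) = (x \in F) by move=> x; rewrite -Hp inE.
have hP : forall y : T', p (val y) \in ~: F.
  move=> y; rewrite inE -Hfix; apply/negP => /eqP/perm_inj E.
  by move: (valP y); rewrite inE -Hfix E eqxx.
have qj : injective (fun y : T' => (exist _ (p (val y)) (hP y) : T')).
  by move=> y1 y2 /(congr1 val) /= /perm_inj /val_inj.
exists (perm qj).
  rewrite inE; apply/forallP => y; rewrite permE; apply/negP => /eqP/(congr1 val) /= /eqP.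
  by rewrite Hfix => H; move: (valP y); rewrite inE H.
apply/permP => x; rewrite !permE.
case: insubP => [y Hy <-|Hn]; first by rewrite permE.
by move: Hn; rewrite inE negbK -Hfix => /eqP ->.
Qed.

Lemma sum_fix (m : nat) :
  (\sum_(p : {perm 'I_m}) 2 ^ #|fixpts p|)%N = Vnum m.
Proof.
rewrite (partition_big (@fixpts m) predT) //=.
rewrite (eq_bigr (fun F : {set 'I_m} => 2 ^ #|F| * subfact (m - #|F|))%N); last first.
  move=> F _; transitivity (\sum_(p | fixpts p == F) 2 ^ #|F|)%N.
    by apply: eq_bigr => p /eqP ->.
  rewrite sum_nat_const -fix_count mulnC; congr (_ * _)%N; by apply: eq_card => p; rewrite inE.
rewrite (partition_big (fun F : {set 'I_m} => inord #|F| : 'I_m.+1) predT) //=.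
rewrite /Vnum; apply: eq_bigr => l _.
have Hl : forall F : {set 'I_m}, ((inord #|F| : 'I_m.+1) == l) = (#|F| == l).
  move=> F; rewrite -val_eqE /= inordK // ltnS; have := max_card F; rewrite card_ord; apply.
under eq_bigl => F do rewrite Hl.
rewrite (eq_bigr (fun _ => 2 ^ l * subfact (m - l)))%N; last by move=> F /eqP ->.
rewrite sum_nat_const.
have -> : #|(fun F : {set 'I_m} => #|F| == l)| = 'C(m, l).
  have := card_draws ('I_m) l; rewrite card_ord => <-; by apply: eq_card => F; rewrite inE.
by rewrite mulnA.
Qed.

Local Open Scope ring_scope.

Theorem theorem3p7 (R : realFieldType) (m : nat) (hm : (0 < m)%N)
  (U : 'I_m -> {ffun 'I_m -> bool} -> R) (v : 'I_m -> bool)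
  (a : 'I_m -> 'I_m -> R) :
  product_game U v a ->
  [/\ (forall g : {ffun 'I_m -> R},
          equilibrium_candidate U g <-> exists p : {perm 'I_m}, EC a p g),
      (forall (p1 p2 : {perm 'I_m}) (g : {ffun 'I_m -> R}),
          EC a p1 g -> EC a p2 g -> p1 = p2),
      (forall p : {perm 'I_m},
          has_card (fun g : {ffun 'I_m -> R} => EC a p g) (2 ^ #|fixpts p|)%N) &
      has_card (fun g : {ffun 'I_m -> R} => equilibrium_candidate U g) (Vnum m)].
Proof.
case=> ha hd hl.
have lam0 : forall i (g : 'I_m -> R), (lam U i g == 0) = [exists j, (j != i) && (g j == a i j)].
  move=> i g; rewrite hl mulf_eq0 signr_eq0 /=.
  apply/prodf_eq0/existsP => [[j Hj E]|[j /andP[Hj E]]]; exists j.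
  - by rewrite Hj /= -subr_eq0.
  - by rewrite Hj.
  - by rewrite subr_eq0.
have cubeL : forall g : 'I_m -> R, in_cube g -> forall i, (i \in Lset g) = ~~ (0 < g i < 1).
  move=> g Hc i; rewrite inE; have /andP[h0 h1] := Hc i.
  by rewrite lt_neqAle h0 (lt_neqAle (g i)) h1 andbT andbT negb_and !negbK eq_sym.

have fwd : forall g : 'I_m -> R, equilibrium_candidate U g -> exists p : {perm 'I_m}, EC a p g.
  move=> g [Hc Hl].
  pose N := [set i | 0 < g i < 1].
  have Hex : forall i, i \in N -> [exists j, (j != i) && (g j == a i j)].
    by move=> i; rewrite inE => /Hl/eqP; rewrite lam0.
  pose f i := if i \in N then odflt i [pick j | (j != i) && (g j == a i j)] else i.
  have fN : forall i, i \in N -> [/\ f i != i, g (f i) = a i (f i) & f i \in N].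
    move=> i Hi; rewrite /f Hi; case: pickP => [j /andP[Hj /eqP Ej]|Hn] /=.
      split => //; rewrite inE Ej; apply: ha; by rewrite eq_sym.
    by move: (Hex i Hi) => /existsP [j]; rewrite Hn.
  have fout : forall i, i \notin N -> f i = i by rewrite /f => i /negbTE ->.
  have finj : injective f.
    move=> i1 i2; case: (boolP (i1 \in N)) => H1; case: (boolP (i2 \in N)) => H2.
    - move=> E; have [n1 g1 _] := fN _ H1; have [n2 g2 _] := fN _ H2.
      apply/eqP; apply: contraT => Hne.
      have := hd i1 i2 (f i1) Hne; rewrite eq_sym n1 E eq_sym n2 -E -g1 => /(_ isT isT).
      by rewrite E g2 -E eqxx.
    - by move=> E; have [_ _ N1] := fN _ H1; move: N1; rewrite E fout // (negbTE H2).
    - by move=> E; have [_ _ N2] := fN _ H2; move: N2; rewrite -E fout // (negbTE H1).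
    - by rewrite !fout.
  pose P := perm finj.
  have PE : forall i, P i = f i by move=> i; rewrite permE.
  have fixP : forall i, ((P^-1)%g i == i) = (i \notin N).
    move=> i; apply/eqP/idP => [E|Hi].
    - apply/negP => Hi; have [n _ _] := fN _ Hi.
      have : P ((P^-1)%g i) = P i by rewrite E.
      by rewrite permKV PE => Ei; move: n; rewrite -Ei eqxx.
    - by rewrite -{1}(fout _ Hi) -PE permK.
  exists (P^-1)%g; split => //.
  - apply/setP => i; rewrite cubeL // inE fixP inE //.
  - move=> j; rewrite inE fixP negbK => Hj.
    have Ej : f ((P^-1)%g j) = j by rewrite -PE permKV.
    case: (boolP ((P^-1)%g j \in N)) => Hi.
      by have [_ G _] := fN _ Hi; rewrite -{1}Ej G Ej.
    by rewrite fout // in Ej; move: (fixP j); rewrite Ej eqxx Hj.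
have bwd : forall (g : 'I_m -> R) (p : {perm 'I_m}), EC a p g -> equilibrium_candidate U g.
  move=> g p [Hc HL Hj]; split => // i Hi.
  apply/eqP; rewrite lam0; apply/existsP; exists ((p^-1)%g i).
  have Hnf : i \notin fixpts p by rewrite -HL cubeL // negbK.
  have pj : p ((p^-1)%g i) = i := permKV p i.
  have ne : (p^-1)%g i != i.
    apply: contra Hnf => /eqP E; rewrite inE; apply/eqP; by rewrite -{1}E pj.
  have Hnot : (p^-1)%g i \notin fixpts p by rewrite inE pj eq_sym.
  by rewrite ne /= Hj // pj.
have disj : forall (p1 p2 : {perm 'I_m}) (g : 'I_m -> R), EC a p1 g -> EC a p2 g -> p1 = p2.
  move=> p1 p2 g [Hc1 L1 J1] [_ L2 J2]; apply/permP => j.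
  have F12 : fixpts p1 = fixpts p2 by rewrite -L1 -L2.
  case: (boolP (j \in fixpts p1)) => Hj.
  - have : j \in fixpts p2 by rewrite -F12.
    by rewrite inE in Hj; rewrite inE (eqP Hj) => /eqP ->.
  - have Hj2 : j \notin fixpts p2 by rewrite -F12.
    apply/eqP; apply: contraT => Hne.
    have := hd (p1 j) (p2 j) j Hne.
    rewrite inE in Hj; rewrite inE in Hj2.
    by rewrite Hj Hj2 -J1 ?inE // -J2 ?inE // eqxx => /(_ isT isT).

pose phi (p : {perm 'I_m}) (D : {set 'I_m}) : {ffun 'I_m -> R} :=
  [ffun j => if p j == j then (j \in D)%:R else a (p j) j].
have ecphi : forall p (g : {ffun 'I_m -> R}), EC a p g <-> exists2 D : {set 'I_m}, D \subset fixpts p & g = phi p D.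
  move=> p g; split.
  - case=> Hc HL HJ; exists [set j in fixpts p | g j == 1].
      by apply/subsetP => j; rewrite inE => /andP[].
    apply/ffunP => j; rewrite ffunE; case: ifP => Hf.
    + have : j \in Lset g by rewrite HL inE Hf.
      rewrite !inE Hf /=; case/orP => /eqP ->; rewrite ?eqxx //.
      by rewrite eq_sym oner_eq0.
    + by apply: HJ; rewrite inE Hf.
  - case=> D HD ->; split.
    + move=> j; rewrite ffunE; case: ifP => Hf.
        by case: (j \in D); rewrite /= ?lexx ?ler01.
      have /andP[h0 h1] := ha (p j) j (negbT Hf).
      by rewrite !ltW.
    + apply/setP => j; rewrite !inE ffunE; case: ifP => Hf.
        by case: (j \in D); rewrite /= eqxx ?orbT.
      have /andP[h0 h1] := ha (p j) j (negbT Hf).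
      by rewrite gt_eqF // lt_eqF.
    + by move=> j; rewrite inE ffunE => /negbTE ->.
have phiinj : forall p (D1 D2 : {set 'I_m}), D1 \subset fixpts p -> D2 \subset fixpts p -> phi p D1 = phi p D2 -> D1 = D2.
  move=> p D1 D2 H1 H2 /ffunP E; apply/setP => j.
  case: (boolP (j \in fixpts p)) => Hf.
  - have := E j; rewrite !ffunE; rewrite inE in Hf; rewrite Hf => /eqP; rewrite eqr_nat.
    by case: (j \in D1); case: (j \in D2).
  - by rewrite (contraNF (subsetP H1 j)) // (contraNF (subsetP H2 j)).
have part1 : forall g : {ffun 'I_m -> R}, equilibrium_candidate U g <-> exists p : {perm 'I_m}, EC a p g.
  by move=> g; split => [/fwd|[p /bwd]].
split => //.
- move=> p1 p2 g; exact: disj.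
- move=> p; exists [seq phi p D | D <- enum (powerset (fixpts p))]; split.
  + rewrite map_inj_in_uniq ?enum_uniq // => D1 D2; rewrite !mem_enum !powersetE; exact: phiinj.
  + by rewrite size_map -cardE card_powerset.
  + move=> g; split => [/ecphi[D HD ->]|/mapP[D HD ->]].
      by apply/mapP; exists D => //; rewrite mem_enum powersetE.
    by apply/ecphi; exists D => //; move: HD; rewrite mem_enum powersetE.
- pose S := [set pD : {perm 'I_m} * {set 'I_m} | pD.2 \subset fixpts pD.1].
  exists [seq phi pD.1 pD.2 | pD <- enum S]; split.
  + rewrite map_inj_in_uniq ?enum_uniq // => [[p1 D1] [p2 D2]]; rewrite !mem_enum !inE /= => H1 H2 E.
    have e1 : EC a p1 (phi p1 D1) by apply/ecphi; exists D1.
    have e2 : EC a p2 (phi p2 D2) by apply/ecphi; exists D2.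
    rewrite E in e1; have Ep := disj _ _ _ e1 e2; subst p2.
    by rewrite (phiinj _ _ _ H1 H2 E).
  + rewrite size_map -cardE -sum_fix -sum1_card.
    transitivity (\sum_(pD : {perm 'I_m} * {set 'I_m} | xpredT pD.1 && (pD.2 \subset fixpts pD.1)) 1)%N.
      by apply: eq_bigl => x; rewrite inE.
    rewrite -(pair_big_dep xpredT (fun (p : {perm 'I_m}) (D : {set 'I_m}) => D \subset fixpts p) (fun _ _ => 1%N)) /=.
    apply: eq_bigr => p _; rewrite -card_powerset -sum1_card.
    by apply: eq_bigl => D; rewrite powersetE.
  + move=> g; split => [/part1[p /ecphi[D HD ->]]|/mapP[[p D] HS ->]].
      by apply/mapP; exists (p, D) => //; rewrite mem_enum inE.
    by apply/part1; exists p; apply/ecphi; exists D => //; move: HS; rewrite mem_enum inE.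
Qed.
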